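(* Let $G$ be a finite group, $n\ge 2$, put $g_1=1$, and let $g_2,\dots,g_n\in G$ be nontrivial elements (possibly with repetitions). Let $S=\mathscr M(G,n,n,C)$ where $C$ is the $n\times n$ matrix with $C_{ii}=g_i$ for all $i$ and $C_{ij}=1$ for $i\ne j$. Then both the minimal degree of a faithful action of $S$ by partial transformations and by total transformations equal $$\min\Big\{n\cdot|X|-\sum_{x\in X}\big|\{2\le i\le n\mid g_i\in G_x\}\big|\Big\},$$ where $X$ runs over all faithful right $G$-sets (equivalently, all faithful $G$-sets with no two isomorphic orbits) and $G_x$ is the stabilizer of $x$. In particular, if $g_2=\cdots=g_n=g\ne1$, both minimal degrees equal $\min\{n\deg(\rho)-(n-1)|\mathrm{Fix}(\rho(g))|\}$ as $\rho$ runs over all faithful permutation representations of $G$ (equivalently, those with no two isomorphic orbits).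
   Context: For a group $G$ and matrix $C\colon[n]\times[n]\to G$, the Rees matrix semigroup $\mathscr M(G,n,n,C)$ is $[n]\times G\times[n]$ with $(i,g,j)(k,h,l)=(i,gC_{jk}h,l)$. The minimal degree of a faithful action by partial (resp. total) transformations is the least $m$ such that $S$ embeds in the monoid of partial (resp. total) maps of an $m$-set acting on the right. $\mathrm{Fix}(\rho(g))$ is the set of points fixed by $\rho(g)$; $\deg(\rho)$ is the number of points. *)

(* Defs.v *)
From mathcomp Require Import all_boot all_fingroup.
Set Implicit Arguments. Unset Strict Implicit. Unset Printing Implicit Defensive.
Local Open Scope group_scope.

Definition is_least (P : nat -> Prop) (d : nat) : Prop :=
  P d /\ forall m, P m -> (d <= m)%N.

Definition rees_elt (gT : finGroupType) (n : nat) := ('I_n * gT * 'I_n)%type.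

Definition rees_mul (gT : finGroupType) (n : nat) (C : 'I_n -> 'I_n -> gT)
  (a b : rees_elt gT n) : rees_elt gT n :=
  let: (i, x, j) := a in let: (k, y, l) := b in (i, x * C j k * y, l).

Definition diag_sandwich (gT : finGroupType) (n : nat) (g : 'I_n -> gT)
  (i j : 'I_n) : gT := if i == j then g i else 1.

(* S embeds (faithful right action) into the monoid of partial transformations
   of an m-set: (s t) acts as "first s, then t". *)
Definition faithful_partial_degree (S : Type) (mul : S -> S -> S) (m : nat) : Prop :=
  exists phi : S -> {ffun 'I_m -> option 'I_m},
    injective phi /\
    forall s t x, phi (mul s t) x = obind (phi t) (phi s x).

Definition faithful_total_degree (S : Type) (mul : S -> S -> S) (m : nat) : Prop :=
  exists phi : S -> {ffun 'I_m -> 'I_m},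
    injective phi /\
    forall s t x, phi (mul s t) x = phi t (phi s x).

Definition is_raction (gT : finGroupType) (k : nat) (act : 'I_k -> gT -> 'I_k) : Prop :=
  (forall x, act x 1 = x) /\ (forall x a b, act x (a * b) = act (act x a) b).

Definition faithful_raction (gT : finGroupType) (k : nat) (act : 'I_k -> gT -> 'I_k) : Prop :=
  forall a, (forall x, act x a = x) -> a = 1.

(* n |X| - sum_{x in X} |{ 2 <= i <= n | g_i in G_x }|  (index 0 plays the role of 1). *)
Definition gset_cost (gT : finGroupType) (n : nat) (g : 'I_n -> gT)
  (k : nat) (act : 'I_k -> gT -> 'I_k) : nat :=
  (n * k - \sum_(x : 'I_k) #|[set i : 'I_n | (val i != 0%N) && (act x (g i) == x)]|)%N.

(* Group homomorphism into Sym(k) (mathcomp permutations compose left-to-right). *)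
Definition perm_rep (gT : finGroupType) (k : nat) (rho : gT -> {perm 'I_k}) : Prop :=
  forall a b, rho (a * b) = rho a * rho b.

(* Main.v *)
Require Import Defs.
From mathcomp Require Import all_boot all_fingroup.
From Stdlib Require Import Classical.
Set Implicit Arguments. Unset Strict Implicit. Unset Printing Implicit Defensive.
Local Open Scope group_scope.

Lemma card_pairs (I J : finType) (A : {set J}) (Q : I -> J -> bool) :
  #|[set p : I * J | (p.2 \in A) && Q p.1 p.2]| = (\sum_(y in A) #|[set i | Q i y]|)%N.
Proof.
rewrite -sum1_card big_mkcond /=.
rewrite (eq_bigr (fun p => (fun i j => if (i, j) \in [set p : I * J | (p.2 \in A) && Q p.1 p.2] then 1%N else 0%N) p.1 p.2)); last by case.
rewrite -(pair_bigA _ (fun i j => if (i, j) \in [set p : I * J | (p.2 \in A) && Q p.1 p.2] then 1%N else 0%N)) /=.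
rewrite exchange_big /= [RHS]big_mkcond /=; apply: eq_bigr => y _.

case: (boolP (y \in A)) => yA.
  rewrite -sum1_card [RHS]big_mkcond /=; apply: eq_bigr => i _; by rewrite !inE yA.
by apply: big1 => i _; rewrite inE (negbTE yA).
Qed.

Lemma card_not (I : finType) (Q : pred I) :
  #|[set i | ~~ Q i]| = (#|I| - #|[set i | Q i]|)%N.
Proof.
have := cardsC [set i | Q i].
have -> : ~: [set i | Q i] = [set i | ~~ Q i] by apply/setP => i; rewrite !inE.
by move=> <-; rewrite addKn.
Qed.

Lemma sum_sub (J : finType) (A : {set J}) (N : nat) (c : J -> nat) :
  (forall y, c y <= N)%N ->
  (\sum_(y in A) (N - c y) = N * #|A| - \sum_(y in A) c y)%N.
Proof.
move=> H; rewrite sumnB; last by move=> i _; apply: H.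
by rewrite sum_nat_const mulnC.
Qed.

Lemma least_ex (P : nat -> Prop) : (exists n, P n) -> exists d, is_least P d.
Proof.
move=> [n Pn]; elim/ltn_ind: n Pn => n IH Pn.
case: (classic (exists m, (m < n)%N /\ P m)) => [[m [lt Pm]]|no].
  exact: IH m lt Pm.
exists n; split => // m Pm; rewrite leqNgt; apply/negP => lt; apply: no.
by exists m.
Qed.

Section Part1.
Variable gT : finGroupType.
Variable n : nat.
Variable g : 'I_n.+2 -> gT.
Hypothesis g0 : forall i : 'I_n.+2, val i = 0%N -> g i = 1.
Hypothesis gnz : forall i : 'I_n.+2, val i <> 0%N -> g i <> 1.

Local Notation C := (diag_sandwich g).
Local Notation mul := (rees_mul C).
Local Notation S := (rees_elt gT n.+2).

Lemma C0l i : C ord0 i = 1.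
Proof. rewrite /diag_sandwich; case: eqP => // _; exact: g0. Qed.
Lemma C0r i : C i ord0 = 1.
Proof. rewrite /diag_sandwich; case: eqP => // ->; exact: g0. Qed.
Lemma Cne i j : i != j -> C i j = 1.
Proof. by rewrite /diag_sandwich => /negbTE ->. Qed.
Lemma Cii i : C i i = g i.
Proof. by rewrite /diag_sandwich eqxx. Qed.

Lemma gnz' (i : 'I_n.+2) : g i = 1 -> val i = 0%N.
Proof. move=> H; case: (val i =P 0%N) => // /gnz; by rewrite H. Qed.

Section Upper.
Variable k : nat.
Variable act : 'I_k -> gT -> 'I_k.
Hypothesis Ract : is_raction act.
Hypothesis Fact : faithful_raction act.

Lemma act1 x : act x 1 = x. Proof. by case: Ract. Qed.
Lemma actM x a b : act x (a * b) = act (act x a) b. Proof. by case: Ract. Qed.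

Lemma act_ext a b : (forall x, act x a = act x b) -> a = b.
Proof.
move=> H; have : a * b^-1 = 1.
  apply: Fact => x; by rewrite actM H -actM mulgV act1.
by move/eqP; rewrite mulg_eq1 invgK => /eqP.
Qed.

Definition col (p : 'I_n.+2 * 'I_k) : bool := (val p.1 != 0%N) && (act p.2 (g p.1) == p.2).
Definition rr (p : 'I_n.+2 * 'I_k) := if col p then (ord0, p.2) else p.
Definition actP (p : 'I_n.+2 * 'I_k) (s : S) : 'I_n.+2 * 'I_k :=
  (s.2, act p.2 (C p.1 s.1.1 * s.1.2)).

Lemma actP_r p s : actP (rr p) s = actP p s.
Proof.
case: p => j x; case: s => [[i a] l]; rewrite /rr /actP /=.
case: ifP => //= /andP[_ /eqP Hx]; congr (_, _).
rewrite C0l mul1g; case: (eqVneq j i) => [<-|ne].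
  by rewrite Cii actM Hx.
by rewrite Cne // mul1g.
Qed.

Lemma actPM p s t : actP p (mul s t) = actP (actP p s) t.
Proof.
case: p => j x; case: s => [[i a] l]; case: t => [[i' b] l'].
by rewrite /actP /= -!actM !mulgA.
Qed.

Definition RR := [set p | ~~ col p].

Lemma rrR p : rr p \in RR.
Proof.
rewrite /rr inE; case: ifP => [_|->] //; by rewrite /col /= eqxx.
Qed.

Lemma rr_id p : p \in RR -> rr p = p.
Proof. by rewrite inE /rr => /negbTE ->. Qed.

Lemma rr2 p : (rr p).2 = p.2.
Proof. by rewrite /rr; case: ifP. Qed.

Definition phiU (s : S) : {ffun 'I_#|RR| -> 'I_#|RR|} :=
  [ffun q => enum_rank_in (enum_valP q) (rr (actP (enum_val q) s))].

Lemma phiU_val s q : enum_val (phiU s q) = rr (actP (enum_val q) s).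
Proof. by rewrite ffunE enum_rankK_in // rrR. Qed.

Lemma phiU_hom s t x : phiU (mul s t) x = phiU t (phiU s x).
Proof.
apply: enum_val_inj; rewrite !phiU_val actP_r actPM //.
Qed.

Lemma first_eq (l l' : 'I_n.+2) (b : gT) :
  (forall x, (rr (l, act x b)).1 = (rr (l', act x b)).1) -> l != l' -> val l = 0%N.
Proof.
move=> H ne; case: (val l =P 0%N) => // nz; exfalso.
suff : g l = 1 by apply: gnz.
apply: act_ext => y; rewrite act1.
have := H (act y b^-1); rewrite -actM mulVg act1 /rr /col /=.
case: (boolP (act y (g l) == y)) => [/eqP //|_].
have -> : (val l != 0%N) = true by apply/eqP.
case: ifP => _ /= e.
  by case: nz; rewrite e.
by move: ne; rewrite e eqxx.
Qed.

Lemma phiU_inj : injective phiU.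
Proof.
move=> s t e.
have H : forall p, rr (actP p s) = rr (actP p t).
  move=> p; rewrite -(actP_r p s) -(actP_r p t).
  move/ffunP: (e) => /(_ (enum_rank_in (rrR p) (rr p)))/(congr1 enum_val).
  rewrite !phiU_val enum_rankK_in ?rrR //.
clear e; case: s H => [[i a] l]; case: t => [[i' b] l'] H.
have H2 : forall j x, act x (C j i * a) = act x (C j i' * b).
  move=> j x; have := congr1 snd (H (j, x)); by rewrite !rr2.
have ab : a = b.
  apply: act_ext => x; have := H2 ord0 x; by rewrite !C0l !mul1g.
subst b.
have ii : i = i'.
  case: (eqVneq i i') => // ne.
  have gi : g i = 1.
    apply: (mulIg a); rewrite mul1g; apply: act_ext => x.
    by have := H2 i x; rewrite Cii Cne // mul1g.
  have gi' : g i' = 1.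
    apply: (mulIg a); rewrite mul1g; apply: act_ext => x.
    by have := H2 i' x; rewrite Cii Cne 1?eq_sym // mul1g => ->.
  by apply: val_inj; rewrite (gnz' gi) (gnz' gi').
subst i'.
have ll : l = l'.
  case: (eqVneq l l') => // ne.
  have H3 : forall x, (rr (l, act x a)).1 = (rr (l', act x a)).1.
    move=> x; have := congr1 fst (H (ord0, x)); by rewrite /actP /= C0l mul1g.
  apply: val_inj; rewrite (first_eq H3 ne) (first_eq (b := a) (l := l') (l' := l)) // 1?eq_sym //.
by rewrite ll.
Qed.

Lemma card_RR : #|RR| = gset_cost g act.
Proof.
rewrite /gset_cost.
have -> : #|RR| = (\sum_(y in [set: 'I_k]) #|[set i : 'I_n.+2 | ~~ ((val i != 0%N) && (act y (g i) == y))]|)%N.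
  rewrite -(card_pairs [set: 'I_k] (fun i y => ~~ ((val i != 0%N) && (act y (g i) == y)))).
  by apply: eq_card => p; rewrite !inE.

rewrite (eq_bigr (fun y => n.+2 - #|[set i : 'I_n.+2 | (val i != 0%N) && (act y (g i) == y)]|))%N; last first.
  by move=> y _; rewrite card_not card_ord.
rewrite sum_sub; last by move=> y; by apply: leq_trans (max_card _) _; rewrite card_ord.
rewrite cardsT card_ord; congr (_ - _)%N.
by apply: eq_bigl => y; rewrite inE.
Qed.

Lemma upper : faithful_total_degree mul (gset_cost g act).
Proof.
rewrite -card_RR; exists phiU; split; [exact: phiU_inj | exact: phiU_hom].
Qed.

End Upper.

Section Lower.
Variable m : nat.
Variable phi : S -> {ffun 'I_m -> option 'I_m}.
Hypothesis phi_inj : injective phi.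
Hypothesis phi_hom : forall s t x, phi (mul s t) x = obind (phi t) (phi s x).

Definition e0 : S := (ord0, 1, ord0).
Definition Y := [set y | phi e0 y == Some y].

Lemma M1 a b : mul (ord0, a, ord0) (ord0, b, ord0) = (ord0, a * b, ord0).
Proof. by rewrite /= C0l mulg1. Qed.
Lemma M2 j : mul (ord0, 1, j) (ord0, 1, ord0) = e0.
Proof. by rewrite /= C0r !mulg1. Qed.
Lemma M3 j : mul (ord0, 1, j) (j, 1, ord0) = (ord0, g j, ord0).
Proof. by rewrite /= Cii mulg1 mul1g. Qed.
Lemma M4 j j' : j' != j -> mul (ord0, 1, j') (j, 1, ord0) = e0.
Proof. by move=> ne; rewrite /= Cne // !mulg1. Qed.

Lemma inY y : (y \in Y) = (phi e0 y == Some y).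
Proof. by rewrite inE. Qed.

Definition ga (y : 'I_m) (a : gT) := odflt y (phi (ord0, a, ord0) y).

Lemma gaS y a : y \in Y -> phi (ord0, a, ord0) y = Some (ga y a).
Proof.
rewrite inY => /eqP Hy.
have : phi e0 y = obind (phi (ord0, a^-1, ord0)) (phi (ord0, a, ord0) y).
  by rewrite -phi_hom M1 mulgV.
rewrite /ga Hy; by case: (phi (ord0, a, ord0) y).
Qed.

Lemma gaY y a : y \in Y -> ga y a \in Y.
Proof.
move=> yY; rewrite inY; apply/eqP.
have := phi_hom (ord0, a, ord0) e0 y; rewrite /e0 M1 mulg1 gaS //= => <-.
Qed.

Lemma ga1 y : y \in Y -> ga y 1 = y.
Proof.
move=> yY; have := gaS 1 yY; move: yY; rewrite inY => /eqP.
by rewrite /e0 => -> [].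
Qed.

Lemma gaM y a b : y \in Y -> ga y (a * b) = ga (ga y a) b.
Proof.
move=> yY; have := phi_hom (ord0, a, ord0) (ord0, b, ord0) y.
by rewrite M1 !gaS //= ?gaS ?gaY // => [[]].
Qed.

Definition actL (q : 'I_#|Y|) (a : gT) : 'I_#|Y| :=
  enum_rank_in (enum_valP q) (ga (enum_val q) a).

Lemma actL_val q a : enum_val (actL q a) = ga (enum_val q) a.
Proof. by rewrite /actL enum_rankK_in // gaY // enum_valP. Qed.

Lemma actL_ract : is_raction actL.
Proof.
split.
  by move=> q; apply: enum_val_inj; rewrite actL_val ga1 // enum_valP.
by move=> q a b; apply: enum_val_inj; rewrite !actL_val gaM // enum_valP.
Qed.

Lemma actL_faithful : faithful_raction actL.
Proof.
move=> a H.
have Hy : forall y, y \in Y -> ga y a = y.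
  move=> y yY; have := congr1 enum_val (H (enum_rank_in yY y)).
  by rewrite actL_val enum_rankK_in.
have : phi (ord0, a, ord0) = phi e0.
  apply/ffunP => z.
  have := phi_hom e0 (ord0, a, ord0) z; rewrite /e0 M1 mul1g => ->.
  case E : (phi e0 z) => [w|] //=.
  have wY : w \in Y.
    rewrite inY; apply/eqP; have := phi_hom e0 e0 z.
    by rewrite /e0 M1 mulg1 -/e0 E /= => <-.
  by rewrite gaS // Hy.
by move/phi_inj => [].
Qed.

Definition beta (p : 'I_n.+2 * 'I_m) := odflt p.2 (phi (ord0, 1, p.1) p.2).

Lemma betaS j y : y \in Y -> phi (ord0, 1, j) y = Some (beta (j, y)).
Proof.
move=> yY; have := phi_hom (ord0, 1, j) (j, 1, ord0) y.
rewrite M3 gaS // /beta /=; by case: (phi (ord0, 1, j) y).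
Qed.

Lemma beta_e0 j y : y \in Y -> phi e0 (beta (j, y)) = Some y.
Proof.
move=> yY; have := phi_hom (ord0, 1, j) (ord0, 1, ord0) y.
rewrite M2 betaS //= => <-; by move: yY; rewrite inY => /eqP.
Qed.

Lemma beta_fix j j' y : y \in Y -> j != j' -> beta (j, y) = beta (j', y) -> ga y (g j) = y.
Proof.
move=> yY ne e.
have := phi_hom (ord0, 1, j) (j, 1, ord0) y; rewrite M3 gaS // betaS //= e.
have := phi_hom (ord0, 1, j') (j, 1, ord0) y; rewrite M4 1?eq_sym // [phi (ord0, 1, j') y]betaS //= => E1 E2.
by move: yY; rewrite inY => /eqP Hy; move: E2; rewrite -E1 Hy => -[].
Qed.

Definition RL := [set p : 'I_n.+2 * 'I_m | (p.2 \in Y) &&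
   ~~ ((val p.1 != 0%N) && (ga p.2 (g p.1) == p.2))].

Lemma beta_inj : {in RL &, injective beta}.
Proof.
case=> j y [j' y']; rewrite !inE /= -!inY => /andP[yY Hj] /andP[yY' Hj'] e.
have yy : y = y'.
  by have := beta_e0 j yY; rewrite e beta_e0 // => [[]].
subst y'.
case: (eqVneq j j') => [->//|ne].
have ne' : j' != j by rewrite eq_sym.
have f1 := beta_fix yY ne e.
have f2 := beta_fix yY (ne' : j' != j) (esym e).
move: Hj Hj'; rewrite f1 f2 eqxx !andbT !negbK => /eqP h1 /eqP h2.
by move: ne'; rewrite (val_inj (etrans h1 (esym h2)) : j = j') eqxx.
Qed.

Lemma card_RL : #|RL| = gset_cost g actL.
Proof.
rewrite /gset_cost.
have -> : #|RL| = (\sum_(y in Y) #|[set i : 'I_n.+2 | ~~ ((val i != 0%N) && (ga y (g i) == y))]|)%N.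
  rewrite -(card_pairs Y (fun i y => ~~ ((val i != 0%N) && (ga y (g i) == y)))).
  by apply: eq_card => p; rewrite !inE.
rewrite (eq_bigr (fun y => n.+2 - #|[set i : 'I_n.+2 | (val i != 0%N) && (ga y (g i) == y)]|))%N; last first.
  by move=> y _; rewrite card_not card_ord.
rewrite sum_sub; last by move=> y; apply: leq_trans (max_card _) _; rewrite card_ord.
congr (_ - _)%N.
rewrite (big_enum_val (A := mem Y)) /=; apply: eq_bigr => q _.
apply: eq_card => i; rewrite !inE; congr (_ && _).
by rewrite -(inj_eq enum_val_inj) actL_val.
Qed.

Lemma lower_bound : (gset_cost g actL <= m)%N.
Proof.
rewrite -card_RL -(card_in_imset beta_inj).
by apply: leq_trans (max_card _) _; rewrite card_ord.
Qed.


End Lower.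

Lemma total_partial m : faithful_total_degree mul m -> faithful_partial_degree mul m.
Proof.
case=> phi [inj hom]; exists (fun s => [ffun x => Some (phi s x)]); split.
  move=> s t e; apply: inj; apply/ffunP => x.
  have := congr1 (fun f : {ffun 'I_m -> option 'I_m} => f x) e; rewrite /= !ffunE; by case.
by move=> s t x; rewrite !ffunE /= ffunE hom.
Qed.

Lemma part1_main (k0 : nat) (act0 : 'I_k0 -> gT -> 'I_k0) :
  is_raction act0 -> faithful_raction act0 ->
  exists d : nat,
      is_least (fun c => exists (k : nat) (act : 'I_k -> gT -> 'I_k),
                  is_raction act /\ faithful_raction act /\ c = gset_cost g act) d /\
      is_least (faithful_partial_degree mul) d /\
      is_least (faithful_total_degree mul) d.
Proof.
move=> R0 F0.
set P := fun c => exists (k : nat) (act : 'I_k -> gT -> 'I_k),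
                  is_raction act /\ faithful_raction act /\ c = gset_cost g act.
have exP : exists c, P c by exists (gset_cost g act0), k0, act0.
have Pdec : forall c, P c -> faithful_total_degree mul c.
  by move=> c [k [act [R [F ->]]]]; apply: upper.
have Ppart : forall m, faithful_partial_degree mul m -> exists2 c, P c & (c <= m)%N.
  move=> m [phi [inj hom]].
  exists (gset_cost g (actL (phi:=phi))); last by apply: lower_bound.
  exists #|Y phi|, (actL (phi:=phi)); split; [exact: actL_ract | split => //].
  exact: actL_faithful.
have [d [Pd dmin]] := least_ex exP.
exists d; split; first by [].
have Td := Pdec d Pd.
have tot_le : forall m, faithful_partial_degree mul m -> (d <= m)%N.
  by move=> m /Ppart [c Pc le]; apply: leq_trans (dmin c Pc) le.
split; split => //.
  exact: total_partial.
by move=> m /total_partial; apply: tot_le.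
Qed.

End Part1.

Lemma regular_action (gT : finGroupType) :
  exists k (act : 'I_k -> gT -> 'I_k), is_raction act /\ faithful_raction act.
Proof.
exists #|gT|, (fun q a => enum_rank (enum_val q * a)); split; first split.
- by move=> x; rewrite mulg1 enum_valK.
- by move=> x a b; rewrite enum_rankK mulgA.
- move=> a H; have := congr1 enum_val (H (enum_rank 1)).
  by rewrite !enum_rankK mul1g.
Qed.

Lemma card_nz n : #|[set i : 'I_n.+2 | val i != 0%N]| = n.+1.
Proof.
transitivity #|[set~ (ord0 : 'I_n.+2)]|; last by rewrite cardsC1 card_ord.
apply: eq_card => i; rewrite !inE; by case: i => [[|i] ?].
Qed.

Lemma cost2 (gT : finGroupType) (n : nat) (g0 : gT) k (act : 'I_k -> gT -> 'I_k) :
  gset_cost (fun i : 'I_n.+2 => if val i == 0%N then 1 else g0) act =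
  (n.+2 * k - (n.+2 - 1) * #|[set x : 'I_k | act x g0 == x]|)%N.
Proof.
rewrite /gset_cost; congr (_ - _)%N.
rewrite (eq_bigr (fun x => if act x g0 == x then n.+1 else 0%N)); last first.
  move=> x _; case: ifP => H.
    transitivity #|[set i : 'I_n.+2 | val i != 0%N]|; last exact: card_nz.
    apply: eq_card => i; rewrite !inE.
    by case: ifP => //= _; rewrite H.
  apply/eqP; rewrite cards_eq0; apply/eqP/setP => i; rewrite !inE.
  by case: ifP => //= _; rewrite H andbF.
rewrite -big_mkcond /= sum_nat_const subn1 mulnC; congr (_ * _)%N.
by apply: eq_card => x; rewrite !inE.
Qed.

Lemma least_eq (P Q : nat -> Prop) d : (forall c, P c <-> Q c) -> is_least P d -> is_least Q d.
Proof. move=> H [Pd m]; split; first by apply/H. by move=> c /H; apply: m. Qed.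

Theorem proposition2p16 :
  (forall (gT : finGroupType) (n : nat) (g : 'I_n -> gT),
    (2 <= n)%N ->
    (forall i : 'I_n, val i = 0%N -> g i = 1) ->
    (forall i : 'I_n, val i <> 0%N -> g i <> 1) ->
    exists d : nat,
      is_least (fun c => exists (k : nat) (act : 'I_k -> gT -> 'I_k),
                  is_raction act /\ faithful_raction act /\ c = gset_cost g act) d /\
      is_least (faithful_partial_degree (rees_mul (diag_sandwich g))) d /\
      is_least (faithful_total_degree (rees_mul (diag_sandwich g))) d)
  /\
  (forall (gT : finGroupType) (n : nat) (g0 : gT),
    (2 <= n)%N -> g0 <> 1 ->
    let g := fun i : 'I_n => if val i == 0%N then 1 else g0 in
    exists d : nat,
      is_least (fun c => exists (k : nat) (rho : gT -> {perm 'I_k}),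
                  perm_rep rho /\ injective rho /\
                  c = (n * k - (n - 1) * #|[set x : 'I_k | rho g0 x == x]|)%N) d /\
      is_least (faithful_partial_degree (rees_mul (diag_sandwich g))) d /\
      is_least (faithful_total_degree (rees_mul (diag_sandwich g))) d).
Proof.
have P1 : forall (gT : finGroupType) (n : nat) (g : 'I_n -> gT),
    (2 <= n)%N ->
    (forall i : 'I_n, val i = 0%N -> g i = 1) ->
    (forall i : 'I_n, val i <> 0%N -> g i <> 1) ->
    exists d : nat,
      is_least (fun c => exists (k : nat) (act : 'I_k -> gT -> 'I_k),
                  is_raction act /\ faithful_raction act /\ c = gset_cost g act) d /\
      is_least (faithful_partial_degree (rees_mul (diag_sandwich g))) d /\
      is_least (faithful_total_degree (rees_mul (diag_sandwich g))) d.
  move=> gT [|[|n]] // g _ H0 Hnz.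
  have [k0 [act0 [R0 F0]]] := regular_action gT.
  exact: (part1_main H0 Hnz R0 F0).
split => //.
move=> gT [|[|n]] // g0 _ ng0 g.
have [d [Pc [Pp Pt]]] := P1 gT n.+2 g erefl
  (fun i (e : val i = 0%N) => ltac:(by rewrite /g e))
  (fun i (e : val i <> 0%N) => ltac:(by rewrite /g; move/eqP/negbTE: e => ->)).
exists d; split => //; apply: least_eq Pc => c; split.
- move=> [k [act [R [F ->]]]].
  have ainj : forall a, injective (fun x => act x a).
    move=> a x y e; have := congr1 (fun z => act z a^-1) e.
    by case: R => r1 rM; rewrite /= -!rM mulgV !r1.
  exists k, (fun a => perm (ainj a)); split; [|split].
  + move=> a b; apply/permP => x; rewrite permM !permE /=.
    by case: R => _ ->.
  + move=> a b e; apply: (act_ext R F) => x.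
    by have := congr1 (fun p : {perm 'I_k} => p x) e; rewrite /= !permE.
  + rewrite cost2; congr (_ - _ * _)%N; apply: eq_card => x; by rewrite !inE permE.
- move=> [k [rho [hom [inj ->]]]].
  have r1 : rho 1 = 1.
    apply: (mulgI (rho 1)); by rewrite -hom !mulg1.
  exists k, (fun x a => rho a x); split; [|split].
  + split; first by move=> x; rewrite r1 perm1.
    by move=> x a b; rewrite hom permM.
  + move=> a H; apply: inj; rewrite r1; apply/permP => x; by rewrite perm1 H.
  + by rewrite cost2.
Qed.
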